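(* Let $\gamma>0$, $\bar\sigma>0$, $\gamma_0\in(0,\gamma)$ and $n_0$ a positive integer. Let $C(x;n_0)=\mathrm E\left[\inf\{n\ge n_0:\bar Z(n)<x\}\right]$ for $x>0$, where $\bar Z(n)$ is the average of the first $n$ terms of an i.i.d. standard normal sequence, and let $n_g=C\left(\frac{\gamma-\gamma_0}{\bar\sigma};n_0\right)-n_0$. Then $n_g\le\beta e^{-\kappa n_0}$, where $\kappa=\frac{(\gamma-\gamma_0)^2}{2\bar\sigma^2}$ and $\beta=(1-e^{-\kappa})^{-1}$. *)

(* Defs.v *)
From HB Require Import structures.
From mathcomp Require Import all_boot all_order all_algebra.
From mathcomp Require Import all_classical all_reals all_analysis.
Set Implicit Arguments. Unset Strict Implicit. Unset Printing Implicit Defensive.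
Import Order.TTheory GRing.Theory Num.Theory.
Import numFieldNormedType.Exports.
Local Open Scope classical_set_scope.
Local Open Scope ring_scope.

Definition mutually_independent {d} {T : measurableType d} {R : realType}
  (P : probability T R) (Z : nat -> T -> R) : Prop :=
  forall (s : seq nat) (B : nat -> set R),
    uniq s -> (forall i, measurable (B i)) ->
    P (\bigcap_(i in [set` s]) (Z i @^-1` B i)) =
    (\prod_(i <- s) P (Z i @^-1` B i))%E.

Definition iid_std_normal {d} {T : measurableType d} {R : realType}
  (P : probability T R) (Z : nat -> {RV P >-> R}) : Prop :=
  mutually_independent P (fun i => (Z i : T -> R)) /\
  forall i (A : set R), measurable A ->
    distribution P (Z i) A = normal_prob 0 1 A.

Definition sample_mean {T : Type} {R : realType} (Z : nat -> T -> R)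
  (n : nat) (w : T) : R :=
  (n%:R)^-1 * \sum_(i < n) Z i w.

(* inf{ n >= n0 : \bar Z(n) < x }, valued in \bar R (+oo if the set is empty) *)
Definition hitting_time {T : Type} {R : realType} (Z : nat -> T -> R)
  (n0 : nat) (x : R) (w : T) : \bar R :=
  ereal_inf [set (n%:R)%:E | n in [set n | (n0 <= n)%N /\ sample_mean Z n w < x]].

Definition C_exp {d} {T : measurableType d} {R : realType}
  (P : probability T R) (Z : nat -> T -> R) (x : R) (n0 : nat) : \bar R :=
  (\int[P]_w hitting_time Z n0 x w)%E.

(* Main.v *)
Require Import Defs.
From HB Require Import structures.
From mathcomp Require Import all_boot all_order all_algebra.
From mathcomp Require Import all_classical all_reals all_analysis.
From mathcomp Require Import measurable_realfun ring lra archimedean.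
Set Implicit Arguments. Unset Strict Implicit. Unset Printing Implicit Defensive.
Import Order.TTheory GRing.Theory Num.Theory.
Import numFieldNormedType.Exports.
Local Open Scope classical_set_scope.
Local Open Scope ring_scope.
Import HBNNSimple.

Section H.
Local Open Scope ereal_scope.
Context d1 d3 (X : measurableType d1) (Y : measurableType d3) (R : realType)
  (mu : {measure set X -> \bar R}) (p : X -> Y) (w : X -> R).
Hypotheses (mp : measurable_fun setT p) (mw : measurable_fun setT w)
  (w0 : forall x, (0 <= w x)%R).

Lemma H1 (h : {nnsfun Y >-> R}) :
  \int[mu]_x (h (p x) * w x)%:E =
  \sum_(y \in range h) (y%:E * \int[mu]_x (\1_(h @^-1` [set y]) (p x) * w x)%:E).
Proof.
have mi y : measurable_fun setT (fun x => (\1_(h @^-1` [set y]) (p x) * w x)%R).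
  apply: measurable_funM => //; apply: measurableT_comp => //.
have hy y : y \in range h -> (0 <= y)%R.
  by rewrite inE => -[t _ <-].
transitivity (\int[mu]_x (\sum_(y \in range h)
   (y * (\1_(h @^-1` [set y]) (p x) * w x))%:E)).
  apply: eq_integral => x _; rewrite fsumEFin //; congr EFin.
  rewrite {1}fimfunE /= mulrC fsbig_distrr //.
  by apply: eq_fsbigr => y _; rewrite /= mulrC mulrA.
rewrite ge0_integral_fsum//; last first.
  move=> y x _; rewrite mulrA EFinM mule_ge0 ?lee_fin//.
  by have := nnfun_muleindic_ge0 h y (p x); rewrite -EFinM.
  by move=> y; apply/measurable_EFinP; apply: measurable_funM.
apply: eq_fsbigr => y yh.
under eq_integral do rewrite EFinM.
rewrite ge0_integralZl//.
- by apply/measurable_EFinP.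
- by move=> x _; rewrite lee_fin mulr_ge0.
- by rewrite lee_fin hy.
Qed.

Lemma H2 (f : Y -> R) (mf : measurable_fun setT (EFin \o f))
  (f0 : forall y, (0 <= f y)%R) :
  \int[mu]_x (f (p x) * w x)%:E =
  limn (fun n => \int[mu]_x (nnsfun_approx measurableT mf n (p x) * w x)%:E).
Proof.
rewrite -monotone_convergence//.
- apply: eq_integral => x _; apply/esym/cvg_lim => //.
  under eq_fun do rewrite EFinM.
  rewrite EFinM; apply: cvgeZr => //.
  have := @cvg_nnsfun_approx _ _ _ _ measurableT _ mf (fun y _ => f0 y) (p x) I.
  by [].
- move=> n; apply/measurable_EFinP; apply: measurable_funM => //.
  by apply: measurableT_comp.
- by move=> n x _; rewrite lee_fin mulr_ge0.
- move=> x _ m n mn; rewrite lee_fin ler_wpM2r//.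
  by have /lefP := nd_nnsfun_approx measurableT mf mn; apply.
Qed.
End H.

Lemma L d1 d2 d3 (X1 : measurableType d1) (X2 : measurableType d2)
  (Y : measurableType d3) (R : realType)
  (mu1 : {measure set X1 -> \bar R}) (mu2 : {measure set X2 -> \bar R})
  (p1 : X1 -> Y) (p2 : X2 -> Y) (w1 : X1 -> R) (w2 : X2 -> R) :
  measurable_fun setT p1 -> measurable_fun setT p2 ->
  measurable_fun setT w1 -> measurable_fun setT w2 ->
  (forall x, 0 <= w1 x) -> (forall x, 0 <= w2 x) ->
  (forall B, measurable B ->
     (\int[mu1]_x (\1_B (p1 x) * w1 x)%:E = \int[mu2]_x (\1_B (p2 x) * w2 x)%:E)%E) ->
  forall f : Y -> R, measurable_fun setT f -> (forall y, 0 <= f y) ->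
  (\int[mu1]_x (f (p1 x) * w1 x)%:E = \int[mu2]_x (f (p2 x) * w2 x)%:E)%E.
Proof.
move=> mp1 mp2 mw1 mw2 w10 w20 hB f mf f0.
have mf' : measurable_fun setT (EFin \o f) by apply/measurable_EFinP.
rewrite (H2 mu1 mp1 mw1 w10 mf' f0) (H2 mu2 mp2 mw2 w20 mf' f0).
do 2 f_equal; apply/funext => n.
rewrite !H1//; apply: eq_fsbigr => y _; congr (_ * _)%E.
by apply: hB.
Qed.

Lemma gauss_shift (R : realType) (t x : R) :
  expR (t * x) * normal_pdf 0 1 x = expR (t ^+ 2 / 2) * normal_pdf t 1 x.
Proof.
rewrite /normal_pdf oner_eq0 /=.
rewrite mulrCA [in RHS]mulrCA; congr (_ * _).
rewrite /normal_fun -!expRD; congr expR.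
by rewrite expr1n subr0; field.
Qed.

Lemma mgf_normal d (T : measurableType d) (R : realType) (P : probability T R)
  (X : {RV P >-> R}) :
  (forall A, measurable A -> distribution P X A = normal_prob 0 1 A) ->
  forall t : R, (\int[P]_x (expR (t * X x))%:E = (expR (t ^+ 2 / 2))%:E)%E.
Proof.
move=> hX t.
have mX : measurable_fun setT X by [].
have := @L _ _ _ _ _ _ _ P (@lebesgue_measure R) X id (fun _ => 1) (normal_pdf 0 1)
  mX (@measurable_id _ _ setT) (measurable_cst _) (measurable_normal_pdf 0 1)
  (fun _ => ler01) (fun x => normal_pdf_ge0 0 1 x).
move=> /(_ _ (fun z => expR (t * z))) H.
under eq_integral do rewrite -[expR _]mulr1.
rewrite H; last 3 first.
- move=> B mB.
  have mXB : measurable (X @^-1` B).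
    by rewrite -[X @^-1` B]setTI; apply: mX.
  transitivity (\int[P]_x (\1_(X @^-1` B) x)%:E)%E.
    by apply: eq_integral => x _; rewrite mulr1 !indicE.
  rewrite integral_indic// setIT.
  transitivity (distribution P X B); first by [].
  rewrite hX// /normal_prob [LHS]integral_mkcond.
  apply: eq_integral => x _; rewrite patchE indicE.
  by case: (x \in B); rewrite ?mul1r ?mul0r.
- by apply: measurableT_comp => //; apply: measurable_funM.
- by move=> y; exact: expR_ge0.
under eq_integral do rewrite gauss_shift EFinM.
rewrite ge0_integralZl//.
- by rewrite integral_normal_pdf mule1.
- by apply/measurable_EFinP; exact: measurable_normal_pdf.
- by move=> x _; rewrite lee_fin normal_pdf_ge0.
Qed.

Lemma set_cons (a : nat) (t : seq nat) : [set` a :: t] = a |` [set` t].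
Proof.
apply/funext => x; apply/propext; rewrite /= inE; split.
- by case/orP => [/eqP ->|xt]; [left|right].
- by case => [->|xt]; rewrite ?eqxx ?xt ?orbT.
Qed.

Section indep.
Local Open Scope ereal_scope.
Context d (T : measurableType d) (R : realType) (P : probability T R)
  (Z : nat -> {RV P >-> R}).
Hypothesis hind : mutually_independent P (fun i => (Z i : T -> R)).
Variables (f : R -> R) (M : R).
Hypotheses (mf : measurable_fun setT f) (f0 : forall y, (0 <= f y)%R)
  (hM : forall i, \int[P]_x (f (Z i x))%:E = M%:E).

Definition Ev (t : seq nat) (B : nat -> set R) :=
  \bigcap_(i in [set` t]) (Z i @^-1` B i).

Lemma Ev_cons a t B : Ev (a :: t) B = Z a @^-1` B a `&` Ev t B.
Proof. by rewrite /Ev set_cons bigcap_setU1. Qed.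

Lemma mEv t B : (forall i, measurable (B i)) -> measurable (Ev t B).
Proof.
move=> mB; elim: t => [|a t IH].
  have -> : Ev [::] B = setT by apply/seteqP; split => // x _ i.
  exact: measurableT.
rewrite Ev_cons; apply: measurableI => //.
by rewrite -[_ @^-1` _]setTI; apply: (measurable_funP (Z a)).
Qed.

Lemma mprod (s : seq nat) :
  measurable_fun setT (fun x => \prod_(i <- s) f (Z i x))%R.
Proof.
elim: s => [|a s IH].
  by under eq_fun do rewrite big_nil; exact: measurable_cst.
under eq_fun do rewrite big_cons.
by apply: measurable_funM => //; apply: measurableT_comp.
Qed.

Lemma prod_ge0 (s : seq nat) x : (0 <= \prod_(i <- s) f (Z i x))%R.
Proof. by apply: prodr_ge0 => i _. Qed.

Lemma claim (s : seq nat) : forall t B, uniq s -> uniq t ->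
  (forall i, i \in s -> i \notin t) -> (forall i, measurable (B i)) ->
  \int[P]_x ((\prod_(i <- s) f (Z i x)) * \1_(Ev t B) x)%:E =
  (M ^+ size s)%:E * P (Ev t B).
Proof.
elim: s => [|a s IH] t B us ut st mB.
  under eq_integral do rewrite big_nil mul1r.
  rewrite integral_indic//; last exact: mEv.
  by rewrite expr0 mul1e setIT.
move: us => /= /andP[as_ us].
have aNt : a \notin t by apply: st; rewrite mem_head.
have mZ i (A : set R) : measurable A -> measurable (Z i @^-1` A).
  by move=> mA; rewrite -[_ @^-1` _]setTI; apply: (measurable_funP (Z i)).
have finP (A : set T) : measurable A -> P A = (fine (P A))%:E.
  by move=> mA; rewrite fineK// fin_num_measure.
pose w1 x := (\prod_(i <- s) f (Z i x) * \1_(Ev t B) x)%R.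
pose c := (M ^+ size s * fine (P (Ev t B)))%R.
have mw1 : measurable_fun setT w1.
  apply: measurable_funM; first exact: mprod.
  by apply: measurable_indic; exact: mEv.
have w10 x : (0 <= w1 x)%R by rewrite /w1 mulr_ge0 ?prod_ge0.
have M0 : (0 <= M)%R.
  rewrite -lee_fin -(hM 0) integral_ge0// => x _; by rewrite lee_fin.
have c0 : (0 <= c)%R.
  by rewrite /c mulr_ge0 ?exprn_ge0// fine_ge0// measure_ge0.
transitivity (\int[P]_x (f (Z a x) * w1 x)%:E).
  by apply: eq_integral => x _; rewrite big_cons /w1 mulrA.
rewrite (@L _ _ _ _ _ _ _ P P (Z a) (Z a) w1 (fun _ => c)) //; last first.
  move=> B0 mB0.
  pose B' j := if j == a then B0 else B j.
  have mB' j : measurable (B' j) by rewrite /B'; case: ifP.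
  have eqE : Ev (a :: t) B' = Z a @^-1` B0 `&` Ev t B.
    rewrite Ev_cons /B' eqxx; congr (_ `&` _).
    apply/seteqP; split => x /= h i ti; have := h i ti; rewrite /B';
      by case: eqP => // ia; move: ti; rewrite ia /= => at_; move: aNt; rewrite at_.
  transitivity (\int[P]_x (\prod_(i <- s) f (Z i x) * \1_(Ev (a :: t) B') x)%:E).
    apply: eq_integral => x _; rewrite eqE indicI /w1 /=.
    by rewrite [(\1_B0 _)]indicE -[(_ \in B0)]/(x \in Z a @^-1` B0) -indicE mulrCA.
  rewrite IH//; last first.
    move=> i is_; rewrite inE negb_or; apply/andP; split.
      by apply: contraNneq as_ => <-.
    by apply: st; rewrite inE is_ orbT.
    by rewrite /= aNt.
  have -> : P (Ev (a :: t) B') = P (Z a @^-1` B0) * P (Ev t B).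
    have uat : uniq (a :: t) by rewrite /= aNt.
    have -> : P (Ev (a :: t) B') = (\prod_(i <- a :: t) P (Z i @^-1` B' i))%E
      := hind uat mB'.
    have -> : P (Ev t B) = (\prod_(i <- t) P (Z i @^-1` B i))%E := hind ut mB.
    rewrite big_cons /B' eqxx; congr (_ * _).
    apply: eq_big_seq => i it; case: eqP => // ia.
    by move: aNt; rewrite -ia it.
  rewrite (eq_integral (fun x => (\1_(Z a @^-1` B0) x)%:E * c%:E)); last first.
    by move=> x _; rewrite EFinM !indicE.
  rewrite ge0_integralZr//; try (by move=> x _; rewrite lee_fin);
    try (by apply/measurable_EFinP; apply: measurable_indic; exact: mZ).
  rewrite integral_indic//; last exact: mZ.
  rewrite setIT /c !EFinM fineK ?fin_num_measure ?mEv//.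
  by rewrite muleCA.
  exact: mEv.
under eq_integral do rewrite EFinM.
rewrite ge0_integralZr//; try (by move=> x _; rewrite lee_fin);
  try (by apply/measurable_EFinP; apply: measurableT_comp).
rewrite hM /c !EFinM fineK ?fin_num_measure; last exact: mEv.
by rewrite /= exprS EFinM muleA.
by [].
Qed.
End indep.

Section chernoff.
Local Open Scope ereal_scope.
Context d (T : measurableType d) (R : realType) (P : probability T R)
  (Z : nat -> {RV P >-> R}).
Hypothesis hZ : @iid_std_normal d T R P Z.

Lemma prod_exp_int (t : R) (n : nat) :
  \int[P]_x (\prod_(i < n) expR (t * Z i x))%:E = (expR (t ^+ 2 / 2) ^+ n)%:E.
Proof.
case: hZ => hind hdist.
have mf : measurable_fun setT (fun z : R => expR (t * z)).
  by apply: measurableT_comp => //; apply: measurable_funM.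
have hM i : \int[P]_x (expR (t * Z i x))%:E = (expR (t ^+ 2 / 2))%:E.
  by apply: mgf_normal => A mA; exact: hdist.
have := @claim _ _ _ P Z hind (fun z => expR (t * z)) (expR (t ^+ 2 / 2))
  mf (fun y => expR_ge0 _) hM (iota 0 n) [::] (fun _ => setT) (iota_uniq 0 n) erefl
  (fun _ _ => erefl) (fun _ => measurableT).
rewrite size_iota.
have -> : Ev Z [::] (fun _ => setT) = setT by apply/seteqP; split => // x _ i.
rewrite probability_setT mule1 => <-.
apply: eq_integral => x _; rewrite indicE in_setT mulr1.
have -> : iota 0 n = index_iota 0 n by rewrite /index_iota subn0.
by rewrite big_mkord.
Qed.

Lemma expR_sum_ord (n : nat) (g : nat -> R) :
  (expR (\sum_(i < n) g i) = \prod_(i < n) expR (g i))%R.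
Proof.
elim/big_rec2: _ => [|i y1 y2 _ <-]; first by rewrite expR0.
by rewrite expRD.
Qed.

Lemma tail_bound (x0 : R) (n : nat) : (0 < x0)%R -> (0 < n)%N ->
  P [set w | x0 <= sample_mean (fun i => Z i : T -> R) n w]%R <=
  ((expR (- (x0 ^+ 2 / 2))) ^+ n)%:E.
Proof.
move=> x00 n0.
pose S w := (\sum_(i < n) Z i w)%R.
have mS : measurable_fun setT S.
  rewrite /S; under eq_fun do rewrite -(big_mkord xpredT (fun i => Z i _)).
  by apply: measurable_sum => i.
pose g w := sample_mean (fun i => Z i : T -> R) n w.
have mg : measurable_fun setT g by apply: measurable_funM.
pose A := [set w | x0 <= g w]%R.
have mA : measurable A.
  have -> : A = g @^-1` `[x0, +oo[%classic.
    by apply/seteqP; split => w /=; rewrite in_itv /= andbT.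
  by rewrite -[_ @^-1` _]setTI; apply: mg => //; exact: measurable_itv.
pose h w := (expR (- (x0 ^+ 2 * n%:R)) * \prod_(i < n) expR (x0 * Z i w))%R.
have mh : measurable_fun setT h.
  apply: measurable_funM => //.
  under eq_fun => w do rewrite -(expR_sum_ord n (fun i => x0 * Z i w)%R).
  by apply: measurableT_comp => //; under eq_fun do rewrite -mulr_sumr;
    apply: measurable_funM.
apply: (@le_trans _ _ (\int[P]_w (h w)%:E)).
  apply: (@le_trans _ _ (\int[P]_w (\1_A w)%:E)).
    by rewrite integral_indic// setIT.
  apply: ge0_le_integral => //.
  - by apply/measurable_EFinP; exact: measurable_indic.
  - by apply/measurable_EFinP.
  move=> w ?; rewrite lee_fin indicE /h -(expR_sum_ord n (fun i => x0 * Z i w)%R) -expRD.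
  case: (boolP (w \in A)) => [|_]; last by rewrite expR_ge0.
  rewrite inE /A /= /g /sample_mean => hw.
  rewrite -[X in (X <= _)%R]expR0 ler_expR -mulr_sumr.
  have n0' : (0 < n%:R :> R)%R by rewrite ltr0n.
  rewrite ler_pdivlMl// in hw.
  have := ler_wpM2l (ltW x00) hw.
  have -> : (x0 * (n%:R * x0) = x0 ^+ 2 * n%:R)%R by ring.
  by rewrite -subr_ge0 addrC.
under eq_integral do rewrite /h EFinM.
rewrite ge0_integralZl//; last 2 first.
- apply/measurable_EFinP.
  under eq_fun => w do rewrite -(expR_sum_ord n (fun i => x0 * Z i w)%R).
  by apply: measurableT_comp => //; under eq_fun do rewrite -mulr_sumr;
    apply: measurable_funM.
- by move=> w ?; rewrite lee_fin prodr_ge0// => i _; exact: expR_ge0.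
rewrite prod_exp_int -EFinM lee_fin -expRM_natl -expRD -expRM_natl.
rewrite le_eqVlt; apply/orP; left; apply/eqP; congr expR.
by field.
Qed.
End chernoff.

Lemma le_integral_nomeas d (T : measurableType d) (R : realType)
  (mu : {measure set T -> \bar R}) (f g : T -> \bar R) :
  (forall x, (0 <= f x)%E) -> (forall x, (f x <= g x)%E) ->
  (\int[mu]_x f x <= \int[mu]_x g x)%E.
Proof.
move=> f0 fg.
have g0 x : (0 <= g x)%E by apply: le_trans (f0 x) (fg x).
rewrite !ge0_integralTE//.
apply: ereal_sup_le => _ [h hf <-]; exists h => //= x.
exact: le_trans (hf x) (fg x).
Qed.

Lemma ge_nat_pinfty (R : realType) (s : \bar R) :
  (forall m : nat, ((m%:R)%:E <= s)%E) -> s = +oo%E.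
Proof.
case: s => [r| |] //= h.
  have := h (Num.Def.trunc r).+1; rewrite lee_fin => /(lt_le_trans (truncnS_gt r)).
  by rewrite ltxx.
by have := h 0%N.
Qed.

Lemma geom_partial (R : realType) (q : R) (n0 N : nat) : 0 <= q < 1 ->
  \sum_(0 <= k < N) (if (k < n0)%N then 1 else q ^+ k) <= n0%:R + q ^+ n0 / (1 - q).
Proof.
case/andP => q0 q1.
have q1' : 0 < 1 - q by rewrite subr_gt0.
have inv0 : 0 <= (1 - q)^-1 by rewrite invr_ge0 ltW.
suff H : \sum_(0 <= k < N) (if (k < n0)%N then 1 else q ^+ k) +
   (if (N <= n0)%N then (n0 - N)%:R + q ^+ n0 / (1 - q) else q ^+ N / (1 - q))
   = n0%:R + q ^+ n0 / (1 - q).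
  rewrite -H lerDl; case: ifP => _.
    by rewrite addr_ge0// mulr_ge0// exprn_ge0.
  by rewrite mulr_ge0// exprn_ge0.
elim: N => [|N IH].
  by rewrite big_geq// add0r subn0.
rewrite big_nat_recr//= -IH -addrA; congr (_ + _).
have qn0 : 1 - q != 0 by rewrite gt_eqF.
case: (ltngtP N n0) => hN.
- rewrite subnS.
  have hp : (0 < n0 - N)%N by rewrite subn_gt0.
  rewrite -[in RHS](prednK hp) -addn1 natrD.
  by rewrite addrCA addrA [1 + _]addrC.
- by rewrite exprS; field.
- by rewrite hN subnn add0r exprS; field.
Qed.

Lemma hit_le (R : realType) (T : Type) (Zf : nat -> T -> R) (n0 : nat) (x : R)
  (w : T) :
  (hitting_time Zf n0 x w <= \sum_(0 <= k <oo)
    ((if (k < n0)%N then 1 else \1_[set w' | x <= sample_mean Zf k w'] w)%:E))%E.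
Proof.
set s := (\sum_(0 <= k <oo) _)%E.
have u0 k : (0 <= ((if (k < n0)%N then (1 : R) else
    \1_[set w' | x <= sample_mean Zf k w'] w)%:E))%E.
  by rewrite lee_fin; case: ifP => // _; rewrite indicE.
have s_ge m : (forall k, (k < m)%N -> (k < n0)%N \/ x <= sample_mean Zf k w) ->
    ((m%:R)%:E <= s)%E.
  move=> hm; apply: le_trans (nneseries_lim_ge m (fun n _ _ => u0 n)).
  rewrite (@eq_big_nat _ _ _ 0 m _ (fun _ => 1%E)); last first.
    move=> k /andP[_ km]; case: (hm k km) => [->//|hk].
    case: ifP => // _; rewrite indicE (_ : (w \in _) = true)//.
    by apply/mem_set.
  by rewrite sumEFin sumr_const_nat subn0.
case: (pselect (exists n, (n0 <= n)%N && (sample_mean Zf n w < x))) => hex.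
  case: (ex_minnP hex) => m /andP[hm1 hm2] hmin.
  apply: le_trans (s_ge m _).
    by apply: ereal_inf_lbound; exists m.
  move=> k km; case: (ltnP k n0) => hk; [by left|right].
  rewrite leNgt; apply/negP => hlt.
  by have := hmin k; rewrite hk hlt => /(_ erefl); rewrite leqNgt km.
rewrite (@ge_nat_pinfty _ s) ?leey// => m; apply: s_ge => k _.
case: (ltnP k n0) => hk; [by left|right].
rewrite leNgt; apply/negP => hlt; apply: hex; exists k.
by rewrite hk hlt.
Qed.

Lemma mA_sm d (T : measurableType d) (R : realType) (P : probability T R)
  (Z : nat -> {RV P >-> R}) (x : R) (k : nat) :
  measurable [set w | x <= sample_mean (fun i => Z i : T -> R) k w].
Proof.
pose g w := sample_mean (fun i => Z i : T -> R) k w.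
have mg : measurable_fun setT g.
  apply: measurable_funM => //.
  under eq_fun do rewrite -(big_mkord xpredT (fun i => Z i _)).
  by apply: measurable_sum => i.
have -> : [set w | x <= sample_mean (fun i => Z i : T -> R) k w] =
    g @^-1` `[x, +oo[%classic.
  by apply/seteqP; split => w /=; rewrite in_itv /= andbT.
by rewrite -[_ @^-1` _]setTI; apply: mg => //; exact: measurable_itv.
Qed.

Theorem lemma6 (R : realType) (d : measure_display) (T : measurableType d)
  (P : probability T R) (Z : nat -> {RV P >-> R})
  (gamma sigmabar gamma0 : R) (n0 : nat) :
  0 < gamma -> 0 < sigmabar -> 0 < gamma0 -> gamma0 < gamma -> (0 < n0)%N ->
  @iid_std_normal d T R P Z ->
  let kappa := (gamma - gamma0) ^+ 2 / (2 * sigmabar ^+ 2) in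
  let beta := (1 - expR (- kappa))^-1 in
  let n_g := (@C_exp d T R P (fun i => (Z i : T -> R)) ((gamma - gamma0) / sigmabar) n0
              - (n0%:R)%:E)%E in
  (n_g <= (beta * expR (- kappa * n0%:R))%:E)%E.
Proof.
move=> hg hs hg0 hgg0 hn0 hZ; cbv zeta.
set kappa := (gamma - gamma0) ^+ 2 / (2 * sigmabar ^+ 2).
set beta := (1 - expR (- kappa))^-1.
set x := (gamma - gamma0) / sigmabar.
have x0 : 0 < x by rewrite divr_gt0 // subr_gt0.
have sn0 : sigmabar != 0 by rewrite gt_eqF.
have kE : kappa = x ^+ 2 / 2 by rewrite /kappa /x; field.
have k0 : 0 < kappa by rewrite kE divr_gt0// exprn_gt0.
set q := expR (- kappa).
have q0 : 0 <= q by exact: expR_ge0.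
have q1 : q < 1 by rewrite expR_lt1 oppr_lt0.
have qn : expR (- kappa * n0%:R) = q ^+ n0 by rewrite expRM_natr.
rewrite qn leeBlDl //.
pose A k := [set w | x <= sample_mean (fun i => Z i : T -> R) k w].
have mA k : measurable (A k) by exact: mA_sm.
apply: le_trans (le_integral_nomeas P _ (hit_le _ n0 x)) _.
  move=> w; apply/ereal_infP => _ [n _ <-].
  by rewrite lee_fin.
rewrite integral_nneseries //; last 2 first.
- move=> k; case: (k < n0)%N; first exact: measurable_cst.
  by apply/measurable_EFinP; apply: measurable_indic; exact: (mA k).
- by move=> k w _; rewrite lee_fin; case: (k < n0)%N => //; rewrite indicE.
apply: le_trans (@lee_nneseries _ _ (fun k => (if (k < n0)%N then 1 else q ^+ k)%:E)
   xpredT 0 _ _) _.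
- by move=> k _ _; apply: integral_ge0 => w _; rewrite lee_fin; case: ifP => // _; rewrite indicE.
- move=> k _; case: ifP => hk.
    by rewrite integral_cst//= mul1e probability_setT.
  rewrite integral_indic//; last exact: (mA k).
  rewrite setIT /q kE.
  apply: (@tail_bound _ _ _ P Z hZ x k x0).
  by apply: leq_trans hn0 _; rewrite leqNgt hk.
apply: lime_le.
  by apply: is_cvg_nneseries => n _ _; rewrite lee_fin; case: ifP => // _; rewrite exprn_ge0.
apply: nearW => N.
rewrite sumEFin lee_fin /beta mulrC.
by apply: geom_partial; rewrite q0 q1.
Qed.
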